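(* Let $H$ be a finite graph with an edge $(x,y)$ such that $\mathrm{Aut}(H;xy)\ne\mathrm{Aut}(H;x,y)$. Then for every positive integer $k$, $$D_2(H,k;xy)=\binom{k}{2}\frac{D(H,k;x,y)}{k^2}\quad\text{and}\quad D_1(H,k;xy)=D(H,k;xy)-\frac{(k-1)\,D(H,k;x,y)}{2k}.$$
   Context: A $k$-labeling of $H$ is a map $\phi:V(H)\to\{1,\dots,k\}$; an automorphism $\pi$ preserves $\phi$ if $\phi(\pi(v))=\phi(v)$ for all $v$. For a subgroup $\Gamma\le\mathrm{Aut}(H)$, $\phi$ is $\Gamma$-distinguishing if the only element of $\Gamma$ preserving $\phi$ is the identity; $\phi,\phi'$ are equivalent with respect to $\Gamma$ if some $\pi\in\Gamma$ satisfies $\phi'(\pi(v))=\phi(v)$ for all $v$; $D(H,k;\Gamma)$ is the number of $\Gamma$-equivalence classes of $\Gamma$-distinguishing $k$-labelings. $\mathrm{Aut}(H;x,y)$ is the group of automorphisms fixing both $x$ and $y$; $\mathrm{Aut}(H;xy)$ is the group of automorphisms mapping the set $\{x,y\}$ to itself. $D(H,k;x,y):=D(H,k;\mathrm{Aut}(H;x,y))$, $D(H,k;xy):=D(H,k;\mathrm{Aut}(H;xy))$. $D_1(H,k;xy)$ (resp. $D_2(H,k;xy)$) is the number of those $\mathrm{Aut}(H;xy)$-equivalence classes of $\mathrm{Aut}(H;xy)$-distinguishing $k$-labelings in which $x$ and $y$ receive the same label (resp. different labels). *)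

(* Defs.v *)
From mathcomp Require Import all_boot all_order all_algebra all_fingroup.
Set Implicit Arguments. Unset Strict Implicit. Unset Printing Implicit Defensive.

Section Distinguishing.
Variable T : finType.

Definition simple_graph (e : rel T) := symmetric e /\ irreflexive e.

Definition Aut (e : rel T) : {set {perm T}} :=
  [set p : {perm T} | [forall u, forall v, e (p u) (p v) == e u v]].

Definition Aut_fix2 (e : rel T) (x y : T) : {set {perm T}} :=
  [set p in Aut e | (p x == x) && (p y == y)].

Definition Aut_edge (e : rel T) (x y : T) : {set {perm T}} :=
  [set p in Aut e | p @: [set x; y] == [set x; y]].

(* k-labelings: maps V(H) -> {1..k}, represented by 'I_k = {0..k-1}. *)
Definition labeling (k : nat) := {ffun T -> 'I_k}.

Definition preserves k (p : {perm T}) (phi : labeling k) :=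
  [forall v, phi (p v) == phi v].

Definition distinguishing k (G : {set {perm T}}) (phi : labeling k) :=
  [forall p in G, preserves p phi ==> (p == 1%g)].

Definition equiv_lab k (G : {set {perm T}}) (phi phi' : labeling k) :=
  [exists p in G, [forall v, phi' (p v) == phi v]].

Definition dist_set k (G : {set {perm T}}) : {set labeling k} :=
  [set phi | distinguishing G phi].

Definition eq_class k (G : {set {perm T}}) (phi : labeling k) : {set labeling k} :=
  [set phi' in dist_set k G | equiv_lab G phi phi'].

Definition Dcount k (G : {set {perm T}}) : nat :=
  #|[set eq_class G phi | phi in dist_set k G]|.

Definition D_fix2 (e : rel T) k x y := Dcount k (Aut_fix2 e x y).
Definition D_edge (e : rel T) k x y := Dcount k (Aut_edge e x y).

Definition D1_edge (e : rel T) k x y : nat :=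
  #|[set eq_class (Aut_edge e x y) phi |
      phi in [set phi in dist_set k (Aut_edge e x y) | phi x == phi y]]|.
Definition D2_edge (e : rel T) k x y : nat :=
  #|[set eq_class (Aut_edge e x y) phi |
      phi in [set phi in dist_set k (Aut_edge e x y) | phi x != phi y]]|.

End Distinguishing.

(* Main.v *)
Require Import Defs.
From mathcomp Require Import all_boot all_order all_algebra all_fingroup.
Set Implicit Arguments. Unset Strict Implicit. Unset Printing Implicit Defensive.

Section Aux.
Variable T : finType.
Variables (e : rel T) (x y : T).
Hypothesis xy : x != y.

Lemma edge_char (p : {perm T}) :
  (p @: [set x; y] == [set x; y]) =
  ((p x == x) && (p y == y)) || ((p x == y) && (p y == x)).
Proof.
rewrite imsetU1 imset_set1.
apply/idP/idP.
- move/eqP=> E.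
  have hx : p x \in [set x; y] by rewrite -E !inE eqxx.
  have hy : p y \in [set x; y] by rewrite -E !inE eqxx orbT.
  have nxy : p x != p y by rewrite (inj_eq perm_inj).
  move: hx hy nxy; rewrite !inE.
  have yx : y != x by rewrite eq_sym.
  by case/orP=> /eqP->; case/orP=> /eqP->; rewrite ?eqxx ?orbT //= ?(negbTE xy) ?(negbTE yx).
- case/orP=> /andP[/eqP-> /eqP->] //. by rewrite setUC.
Qed.

Lemma Aut_mul (p q : {perm T}) : p \in Defs.Aut e -> q \in Defs.Aut e -> (p * q)%g \in Defs.Aut e.
Proof.
rewrite !inE => /forallP hp /forallP hq; apply/forallP=> u; apply/forallP=> v.
rewrite !permM.
move: (hq (p u)) => /forallP /(_ (p v)) /eqP ->.
by move: (hp u) => /forallP /(_ v).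
Qed.

Lemma Aut1 : (1%g : {perm T}) \in Defs.Aut e.
Proof. by rewrite inE; apply/forallP=> u; apply/forallP=> v; rewrite !perm1. Qed.

Lemma fix2E (p : {perm T}) : (p \in Aut_fix2 e x y) = (p \in Defs.Aut e) && ((p x == x) && (p y == y)).
Proof. by rewrite /Aut_fix2 in_set. Qed.

Lemma edgeE (p : {perm T}) : (p \in Aut_edge e x y) = (p \in Defs.Aut e) &&
  (((p x == x) && (p y == y)) || ((p x == y) && (p y == x))).
Proof. by rewrite /Aut_edge in_set edge_char. Qed.

Lemma fix2_group : group_set (Aut_fix2 e x y).
Proof.
apply/group_setP; split; first by rewrite fix2E Aut1 !perm1 !eqxx.
move=> p q; rewrite !fix2E => /andP[hp /andP[/eqP px /eqP py]] /andP[hq /andP[/eqP qx /eqP qy]].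
by rewrite Aut_mul // !permM px py qx qy !eqxx.
Qed.

Lemma edge_group : group_set (Aut_edge e x y).
Proof.
apply/group_setP; split.
  by rewrite edgeE Aut1 !perm1 !eqxx.
move=> p q; rewrite !edgeE => /andP[hp hp2] /andP[hq hq2].
rewrite Aut_mul // !permM.
by case/orP: hp2 => /andP[/eqP-> /eqP->]; case/orP: hq2 => /andP[/eqP-> /eqP->];
  rewrite !eqxx ?orbT.
Qed.

End Aux.
From mathcomp Require Import ring.
Import GRing.Theory Num.Theory.
Section Act.
Variables (T : finType) (k : nat).

Definition lact (phi : labeling T k) (p : {perm T}) : labeling T k :=
  [ffun v => phi ((p^-1)%g v)].

Lemma lact1 : lact^~ 1%g =1 id.
Proof. by move=> phi; apply/ffunP=> v; rewrite ffunE invg1 perm1. Qed.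

Lemma lactM : forall phi, act_morph lact phi.
Proof.
by move=> phi p q; apply/ffunP=> v; rewrite !ffunE invMg permM.
Qed.

Definition lact_action := TotalAction lact1 lactM.

Lemma lactE phi p v : lact_action phi p v = phi ((p^-1)%g v).
Proof. by rewrite /= ffunE. Qed.

Lemma lact_eq phi psi (p : {perm T}) :
  (psi == lact_action phi p) = [forall v, psi (p v) == phi v].
Proof.
apply/eqP/forallP.
- by move=> -> v; rewrite lactE permK.
- move=> h; apply/ffunP=> v; rewrite lactE.
  by move: (h ((p^-1)%g v)); rewrite permKV => /eqP.
Qed.

Lemma preservesE (p : {perm T}) phi : preserves p phi = (lact_action phi p == phi).
Proof. by rewrite eq_sym lact_eq. Qed.

Lemma equivE (G : {set {perm T}}) phi psi :
  equiv_lab G phi psi = (psi \in orbit lact_action G phi).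
Proof.
apply/existsP/orbitP.
- case=> p /andP[pG h]; exists p => //; apply/esym/eqP; by rewrite lact_eq.
- case=> p pG <-; exists p; rewrite pG /=; by rewrite -lact_eq.
Qed.

Variable G : {group {perm T}}.

Lemma distE phi : (phi \in dist_set k G) =
  [forall p in G, (lact_action phi p == phi) ==> (p == 1%g)].
Proof.
rewrite inE /distinguishing; apply/eq_forallb=> p; by rewrite preservesE.
Qed.

Lemma dist_stab phi : phi \in dist_set k G -> ('C_G[phi | lact_action] = 1)%g.
Proof.
rewrite distE => /forallP h; apply/eqP; rewrite eqEsubset sub1G andbT.
apply/subsetP=> p; rewrite inE => /andP[pG /astab1P hp]; rewrite inE.
by move: (h p); rewrite pG hp eqxx.
Qed.

Lemma dist_act phi p : p \in G -> phi \in dist_set k G ->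
  lact_action phi p \in dist_set k G.
Proof.
move=> pG; rewrite !distE => /forallP h; apply/forallP=> q; apply/implyP=> qG.
apply/implyP=> /eqP hq.
have : lact_action phi (p * q * p^-1)%g == phi.
  by rewrite !actM hq -actM mulgV act1.
move: (h (p * q * p^-1)%g); rewrite !groupM ?groupV //= => /implyP H /H.
by rewrite -(conjg_eq1 q p^-1) /conjg invgK mulgA.
Qed.

Lemma acts_of (S : {set labeling T k}) :
  (forall p phi, p \in G -> phi \in S -> lact_action phi p \in S) ->
  [acts G, on S | lact_action].
Proof.
move=> h; apply/actsP=> p pG phi; apply/idP/idP; last exact: h.
move=> H; have := h _ _ (groupVr pG) H; by rewrite -actM mulgV act1.
Qed.

Lemma count_classes (A : {set labeling T k}) :
  A \subset dist_set k G -> [acts G, on A | lact_action] ->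
  #|[set eq_class G phi | phi in A]| * #|G| = #|A|.
Proof.
move=> sA aA.
have -> : [set eq_class G phi | phi in A] = [set orbit lact_action G phi | phi in A].
  apply/eq_in_imset=> phi phiA; apply/setP=> psi; rewrite /eq_class inE equivE.
  apply/andP/idP; first by case.
  move=> H; split=> //; case/orbitP: H => p pG <-; apply: dist_act => //.
  exact: (subsetP sA).
symmetry; apply: card_uniform_partition; last exact: orbit_partition.
move=> O /imsetP[phi phiA ->].
by rewrite card_orbit dist_stab ?indexg1 // (subsetP sA).
Qed.

End Act.

Section Count.
Lemma card_fibers (X Y : finType) (A : {set X}) (f : X -> Y) :
  #|A| = \sum_(b : Y) #|[set a in A | f a == b]|.
Proof.
rewrite -sum1_card (partition_big f predT) //=.
apply: eq_bigr => b _; rewrite -sum1_card; apply: eq_bigl => a; by rewrite !inE.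
Qed.

Lemma mem_sep (X : finType) (A : {set X}) (P : pred X) a :
  (a \in [set b in A | P b]) = (a \in A) && P a.
Proof. by rewrite in_set. Qed.

Lemma card_split (X : finType) (A : {set X}) (P : pred X) :
  #|[set a in A | P a]| + #|[set a in A | ~~ P a]| = #|A|.
Proof.
rewrite -(cardsID [set a | P a] A); congr (_ + _); apply: eq_card=> a; rewrite !inE; by case: (a \in A); case: (P a).
Qed.
End Count.

Section Main.
Variables (T : finType) (e : rel T) (x y : T).
Hypothesis xy : x != y.
Variable k : nat.

Let KK := Group (fix2_group e x y).
Let GG := Group (edge_group e xy).

Lemma sKG : KK \subset GG.
Proof.
apply/subsetP=> p; rewrite /= fix2E (@edgeE _ e x y xy) => /andP[-> /andP[-> ->]] //.
Qed.

Lemma swap_or_fix (q : {perm T}) : q \in GG ->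
  (q x = x /\ q y = y) \/ (q x = y /\ q y = x).
Proof.
rewrite /= (@edgeE _ e x y xy) => /andP[_]; case/orP=> /andP[/eqP-> /eqP->]; by [left|right].
Qed.

Lemma lact_xy (phi : labeling T k) p : p \in GG ->
  (lact_action T k phi p x == lact_action T k phi p y) = (phi x == phi y).
Proof.
move=> pG; rewrite !lactE.
by case: (swap_or_fix (groupVr pG)) => [[-> ->]|[-> ->]] //; rewrite eq_sym.
Qed.

Definition upd (a b : 'I_k) (phi : labeling T k) : labeling T k :=
  [ffun v => if v == x then a else if v == y then b else phi v].

Lemma preserves_upd a b phi p : p \in KK -> preserves p (upd a b phi) = preserves p phi.
Proof.
rewrite /= fix2E => /andP[_ /andP[/eqP px /eqP py]].
apply/eq_forallb => v; rewrite !ffunE.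
have [->|vx] := eqVneq v x; first by rewrite px !eqxx.
have yx : (y == x) = false by apply/negbTE; rewrite eq_sym.
have [->|vy] := eqVneq v y; first by rewrite py yx !eqxx.
have -> : (p v == x) = false by rewrite -{1}px (inj_eq perm_inj) (negbTE vx).
have -> : (p v == y) = false by rewrite -{1}py (inj_eq perm_inj) (negbTE vy).
done.
Qed.

Lemma dist_upd a b phi : (upd a b phi \in dist_set k KK) = (phi \in dist_set k KK).
Proof.
rewrite !inE /distinguishing; apply/eq_forallb => p.
case pK: (p \in KK) => //=; by rewrite preserves_upd.
Qed.

Definition S (a b : 'I_k) := [set phi in dist_set k KK | (phi x == a) && (phi y == b)].

Lemma S_le a b a' b' : #|S a b| <= #|S a' b'|.
Proof.
have yx : (y == x) = false by apply/negbTE; rewrite eq_sym.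
rewrite -(@card_in_imset _ _ (upd a' b')).
  apply: subset_leq_card; apply/subsetP=> psi /imsetP[phi].
  rewrite /S !inE => /andP[hd _] ->.
  move: (dist_upd a' b' phi); rewrite !inE => ->; by rewrite hd !ffunE eqxx yx !eqxx.
move=> p1 p2; rewrite /S !inE => /andP[_ /andP[/eqP h1x /eqP h1y]] /andP[_ /andP[/eqP h2x /eqP h2y]] E.
apply/ffunP=> v; have := congr1 (fun f : labeling T k => f v) E; rewrite !ffunE.
have [->|vx] := eqVneq v x; first by rewrite h1x h2x.
have [->|vy] := eqVneq v y; first by rewrite h1y h2y.
by [].
Qed.

Lemma S_eq a b a' b' : #|S a b| = #|S a' b'|.
Proof. by apply/eqP; rewrite eqn_leq !S_le. Qed.

End Main.

Section Main2.
Variables (T : finType) (e : rel T) (x y : T).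
Hypothesis xy : x != y.
Hypothesis hne : Aut_edge e x y != Aut_fix2 e x y.
Variable k : nat.

Let KK := Group (fix2_group e x y).
Let GG := Group (edge_group e xy).

Lemma cardGK : #|GG| = 2 * #|KK|.
Proof.
have sKG' : KK \subset GG := sKG e xy.
have [s sG sK] : exists2 s, s \in GG & s \notin KK.
  have : KK \proper GG by rewrite properEneq eq_sym hne sKG'.
  by case/properP=> _ [s] *; exists s.
have sswap : s x = y /\ s y = x.
  case: (swap_or_fix sG) => // [[sx sy]]; exfalso; move: sK.
  rewrite /= fix2E sx sy !eqxx andbT.
  by move: sG; rewrite /= (@edgeE _ e x y xy) => /andP[-> _].
have CK : ('C_GG[x | 'P] = KK)%g.
  apply/setP=> p; rewrite in_setI; apply/andP/idP.
  - case=> pG /astab1P; rewrite /= ?apermE => px.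
    rewrite /= fix2E; move: (pG); rewrite /= (@edgeE _ e x y xy) => /andP[-> _] /=.
    case: (swap_or_fix pG) => [[-> ->]|[pxy _]]; first by rewrite !eqxx.
    by move: xy; rewrite -pxy px eqxx.
  - move=> pK; split; first exact: (subsetP sKG').
    apply/astab1P; rewrite /= ?apermE; by move: pK; rewrite /= fix2E => /andP[_ /andP[/eqP -> _]].
have O : orbit 'P GG x = [set x; y].
  apply/setP=> z; rewrite !inE; apply/orbitP/idP.
  - case=> p pG <-; rewrite /= ?apermE.
    by case: (swap_or_fix pG) => [[-> _]|[-> _]]; rewrite eqxx ?orbT.
  - case/orP=> /eqP ->; [by exists 1%g; rewrite ?group1 ?act1|].
    exists s; [exact: sG | by rewrite /= ?apermE (proj1 sswap)].
rewrite -(Lagrange sKG') -CK -card_orbit O cards2 xy mulnC.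
done.
Qed.

Lemma dist_neq (phi : labeling T k) : phi x != phi y ->
  (phi \in dist_set k GG) = (phi \in dist_set k KK).
Proof.
move=> hxy; rewrite !distE; apply/forallP/forallP => h p; apply/implyP => pG.
- by move: (h p); rewrite (subsetP (sKG e xy)).
- apply/implyP=> hp.
  have pK : p \in KK.
    move: (pG); rewrite /= (@edgeE _ e x y xy) fix2E => /andP[-> _] /=.
    case: (swap_or_fix pG) => [[-> ->]|[px _]]; first by rewrite !eqxx.
    move: hp; rewrite -preservesE => /forallP /(_ x); rewrite px eq_sym.
    by rewrite (negbTE hxy).
  by move: (h p); rewrite pK /= hp.
Qed.

Lemma main_nat (a0 : 'I_k) :
  [/\ D_fix2 e k x y * #|KK| = #|S e x y a0 a0| * k * k,
      D2_edge e k x y * (2 * #|KK|) + #|S e x y a0 a0| * k = #|S e x y a0 a0| * k * k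
    & D1_edge e k x y + D2_edge e k x y = D_edge e k x y].
Proof.
set M := #|S e x y a0 a0|.
have ndK : #|dist_set k KK| = M * k * k.
  transitivity (\sum_(a : 'I_k) \sum_(b : 'I_k) M); last by rewrite !big_const_ord !iter_addn_0.
  rewrite (card_fibers _ (fun phi : labeling T k => phi x)); apply: eq_bigr => a _.
  rewrite (card_fibers _ (fun phi : labeling T k => phi y)); apply: eq_bigr => b _.
  rewrite /M -(S_eq e xy a b a0 a0); apply: eq_card => phi; by rewrite /S !inE andbA.
have eqK : #|[set phi in dist_set k KK | phi x == phi y]| = M * k.
  transitivity (\sum_(a : 'I_k) M); last by rewrite !big_const_ord !iter_addn_0.
  rewrite (card_fibers _ (fun phi : labeling T k => phi x)); apply: eq_bigr => a _.
  rewrite /M -(S_eq e xy a a a0 a0); apply: eq_card => phi; rewrite /S !inE.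
  by case: (eqVneq (phi x) a) => [->|_]; rewrite ?andbT ?andbF //= eq_sym.
have neqK := card_split (dist_set k KK) (fun phi : labeling T k => phi x == phi y).
have neqGK : #|[set phi in dist_set k GG | phi x != phi y]| =
             #|[set phi in dist_set k KK | phi x != phi y]|.
  apply: eq_card => phi; rewrite !mem_sep.
  case h: (phi x != phi y); rewrite ?andbF ?andbT //.
  by move: (dist_neq h); rewrite !inE.
have actG (P : pred (labeling T k)) :
    (forall phi p, p \in GG -> P (lact_action T k phi p) = P phi) ->
    [acts GG, on [set phi in dist_set k GG | P phi] | lact_action T k].
  move=> hP; apply: acts_of => p phi pG; rewrite !mem_sep => /andP[hd hp].
  rewrite hP // hp andbT; exact: (dist_act pG hd).
have sub (P : pred (labeling T k)) : [set phi in dist_set k GG | P phi] \subset dist_set k GG.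
  by apply/subsetP=> phi; rewrite mem_sep => /andP[].
have cK := @count_classes T k KK (dist_set k KK) (subxx _)
   (acts_of (fun p phi pG hphi => @dist_act T k KK phi p pG hphi)).
have cG := @count_classes T k GG (dist_set k GG) (subxx _)
   (acts_of (fun p phi pG hphi => @dist_act T k GG phi p pG hphi)).
have c1 := @count_classes T k GG _ (sub (fun phi => phi x == phi y))
   (actG (fun phi => phi x == phi y) (fun phi p pG => lact_xy phi pG)).
have c2 := @count_classes T k GG _ (sub (fun phi => phi x != phi y))
   (actG (fun phi => phi x != phi y) (fun phi p pG => congr1 negb (lact_xy phi pG))).
have spG := card_split (dist_set k GG) (fun phi : labeling T k => phi x == phi y).
rewrite -/KK -/GG in cK cG c1 c2.
have gpos : 0 < #|GG| := cardG_gt0 _.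
split.
- rewrite /D_fix2 /Dcount; rewrite cK; exact: ndK.
- by rewrite -cardGK /D2_edge c2 neqGK -ndK -eqK addnC neqK.
- apply/eqP; rewrite -(eqn_pmul2r gpos) mulnDl /D1_edge /D2_edge /D_edge /Dcount c1 c2 cG.
  by rewrite spG.
Qed.

End Main2.

Lemma bin2_2 n : 'C(n.+1, 2) * 2 = n.+1 * n.
Proof.
rewrite bin2 /= muln2 -[(_ * n)./2.*2]/((n.+1 * n)./2.*2) even_halfK //.
by rewrite oddM /=; case: (odd n).
Qed.

Local Open Scope ring_scope.

Theorem lemma14 (T : finType) (e : rel T) (x y : T) :
  simple_graph e -> e x y ->
  Aut_edge e x y != Aut_fix2 e x y ->
  forall k : nat, (0 < k)%N ->
    ((D2_edge e k x y)%:R : rat)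
      = ('C(k, 2))%:R * (D_fix2 e k x y)%:R / (k ^ 2)%:R
    /\ ((D1_edge e k x y)%:R : rat)
      = (D_edge e k x y)%:R - (k.-1)%:R * (D_fix2 e k x y)%:R / (2 * k)%:R.
Proof.
move=> [_ eirr] exy hne k kpos.
have xy : x != y by apply/eqP => E; move: exy; rewrite E eirr.
case: k kpos => [//|n] _.
have [E1 E2 E3] := main_nat xy hne (@ord0 n).
have kkpos := cardG_gt0 (Group (fix2_group e x y)).
have Ec := bin2_2 n.
move: E1 E2 E3 kkpos Ec.
set kk := #|Group (fix2_group e x y)|. set M := #|S e x y ord0 ord0|.
set df := D_fix2 _ _ _ _. set d1 := D1_edge _ _ _ _. set d2 := D2_edge _ _ _ _.
set de := D_edge _ _ _ _. set c := 'C(_, _).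
move=> E1 E2 E3 kkpos Ec.
have R1 : (df%:R * kk%:R : rat) = M%:R * n.+1%:R * n.+1%:R by rewrite -!natrM E1.
have R2 : (d2%:R * (2%:R * kk%:R) + M%:R * n.+1%:R : rat) = M%:R * n.+1%:R * n.+1%:R
  by rewrite -!natrM -natrD E2.
have R3 : (d1%:R + d2%:R : rat) = de%:R by rewrite -natrD E3.
have Rc : (c%:R * 2%:R : rat) = n.+1%:R * n%:R by rewrite -!natrM Ec.
rewrite natrX natrM.
have e1 : (n.+1)%:R = (n%:R + 1 : rat) by rewrite -addn1 natrD.
rewrite e1 in R1 R2 Rc *.
have kk0 : (kk%:R : rat) != 0 by rewrite pnatr_eq0 -lt0n.
have n0 : (n%:R + 1 : rat) != 0.
  by rewrite -[1]/(1%:R) -natrD pnatr_eq0 addn1.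
have Hdf : (df%:R : rat) = M%:R * (n%:R + 1) * (n%:R + 1) / kk%:R by rewrite -R1 mulfK.
have Hd2' : (d2%:R : rat) * (2%:R * kk%:R) = M%:R * (n%:R + 1) * n%:R.
  apply: (addIr (M%:R * (n%:R + 1))); rewrite R2; ring.
have Hd2 : (d2%:R : rat) = M%:R * (n%:R + 1) * n%:R / (2%:R * kk%:R).
  rewrite -Hd2' mulfK // mulf_neq0 // pnatr_eq0 //.
have Hc : (c%:R : rat) = (n%:R + 1) * n%:R / 2%:R by rewrite -Rc mulfK // pnatr_eq0.
have Hd1 : (d1%:R : rat) = de%:R - d2%:R by rewrite -R3 addrK.
split.
- rewrite Hd2 Hdf Hc; field; rewrite ?kk0 ?n0 ?pnatr_eq0 //.
- rewrite Hd1 Hd2 Hdf; field; rewrite ?kk0 ?n0 ?pnatr_eq0 //.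
Qed.
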